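(* Let $(\Omega,T)$ be a subshift over a finite alphabet $A\subset\mathbb{R}$ satisfying (PW). Then the function $M^E$ is uniform for each $E\in\mathbb{R}$.
   Context: Let $A\subset\mathbb{R}$ be finite with the discrete topology, $A^{\mathbb{Z}}$ with the product topology, and $T$ the shift $(Ta)(n)=a(n+1)$. A subshift is a closed $T$-invariant set $\Omega\subset A^{\mathbb{Z}}$. Let $\mathcal{W}$ be the set of all finite subwords of elements of $\Omega$; $|x|$ denotes the length of a word $x$ and $\sharp_v(x)$ the number of occurrences of the word $v$ in $x$. Condition (PW): there exists $C>0$ such that $\liminf_{|x|\to\infty,\,x\in\mathcal{W}}\frac{\sharp_v(x)}{|x|}|v|\ge C$ for every $v\in\mathcal{W}$. (Such subshifts are strictly ergodic.) For $E\in\mathbb{R}$ let $M^E(\omega)=\begin{pmatrix}E-\omega(1)&-1\\1&0\end{pmatrix}$ and $M^E(n,\omega)=M^E(T^{n-1}\omega)\cdots M^E(\omega)$ for $n>0$, $M^E(0,\omega)=\mathrm{Id}$, $M^E(n,\omega)=M^E(T^n\omega)^{-1}\cdots M^E(T^{-1}\omega)^{-1}$ for $n<0$. $M^E$ is called uniform if, with $\|\cdot\|$ the operator norm, the limit $\lim_{|n|\to\infty}\frac1{|n|}\log\|M^E(n,\omega)\|$ exists for every $\omega\in\Omega$ and the convergence is uniform on $\Omega$. *)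

(* Defs.v *)
From HB Require Import structures.
From mathcomp Require Import all_boot all_order all_algebra.
From mathcomp Require Import all_classical all_reals all_analysis.
Set Implicit Arguments. Unset Strict Implicit. Unset Printing Implicit Defensive.
Import Order.TTheory GRing.Theory Num.Theory.
Import numFieldTopology.Exports.
Local Open Scope classical_set_scope.
Local Open Scope ring_scope.

Section Defs.
Variable R : realType.

(* configurations: elements of R^Z ; the alphabet constraint is imposed separately *)
Definition config := int -> R.

Definition shift (a : config) : config := fun n => a (n + 1).

Definition shiftn (k : int) (a : config) : config := fun n => a (n + k).

Definition subshift (A : set R) (Om : set config) : Prop :=
  Om `<=` [set a | forall n, A (a n)] /\
  closed (Om : set {ptws int -> R}) /\
  shift @` Om = Om.

Definition window (a : config) (k : int) (n : nat) : seq R :=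
  [seq a (k + i%:Z) | i <- iota 0 n].

Definition words (Om : set config) : set (seq R) :=
  [set x | exists a k n, Om a /\ (0 < n)%N /\ x = window a k n].

Definition occ (v x : seq R) : nat :=
  count (fun i => take (size v) (drop i x) == v) (iota 0 (size x - size v).+1).

(* condition (PW): exists C > 0, for all v in W,
   liminf_{|x| -> oo, x in W} (occ v x / |x|) * |v| >= C *)
Definition PW (Om : set config) : Prop :=
  exists C : R, 0 < C /\
    forall v, words Om v ->
      forall eps : R, 0 < eps -> exists N : nat, forall x, words Om x ->
        (N <= size x)%N ->
        C - eps <= (occ v x)%:R / (size x)%:R * (size v)%:R.

Definition Mat (E : R) (a : config) : 'M[R]_2 :=
  \matrix_(i < 2, j < 2)
    (if (i == 0) && (j == 0) then E - a 1
     else if (i == 0) && (j == 1) then -1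
     else if (i == 1) && (j == 0) then 1 else 0).

Fixpoint Mpos (E : R) (k : nat) (a : config) : 'M[R]_2 :=
  match k with
  | 0 => 1%:M
  | k'.+1 => Mat E (shiftn k'%:Z a) *m Mpos E k' a
  end.

Fixpoint Mneg (E : R) (k : nat) (a : config) : 'M[R]_2 :=
  match k with
  | 0 => 1%:M
  | k'.+1 => invmx (Mat E (shiftn (- (k'.+1)%:Z) a)) *m Mneg E k' a
  end.

Definition Mcoc (E : R) (n : int) (a : config) : 'M[R]_2 :=
  match n with
  | Posz k => Mpos E k a
  | Negz k => Mneg E k.+1 a
  end.

Definition vnorm (v : 'cV[R]_2) : R := Num.sqrt (\sum_(i < 2) v i 0 ^+ 2).

Definition opnorm (M : 'M[R]_2) : R :=
  sup [set vnorm (M *m v) | v in [set v : 'cV[R]_2 | vnorm v = 1]].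

Definition uniform_cocycle (E : R) (Om : set config) : Prop :=
  exists L : config -> R,
    forall eps : R, 0 < eps -> exists N : nat,
      forall a, Om a -> forall n : int, (N <= `|n|)%N ->
        `| ln (opnorm (Mcoc E n a)) / (`|n|%N)%:R - L a | < eps.

End Defs.

(* Main.v *)
Require Import Defs.
From HB Require Import structures.
From mathcomp Require Import all_boot all_order all_algebra.
From mathcomp Require Import all_classical all_reals all_analysis.
From mathcomp Require Import lra ring zify.
Set Implicit Arguments. Unset Strict Implicit. Unset Printing Implicit Defensive.
Import Order.TTheory GRing.Theory Num.Theory.
Local Open Scope classical_set_scope.
Local Open Scope ring_scope.

Section P1.
Variable R : realType.
Implicit Types (M A B : 'M[R]_2).

Definition S2 M : R := `|M 0 0| + `|M 0 1| + `|M 1 0| + `|M 1 1|.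

Lemma mul22 A B i j : (A *m B) i j = A i 0 * B 0 j + A i 1 * B 1 j.
Proof.
rewrite mxE !big_ord_recr big_ord0 /= add0r.
have -> : widen_ord (leqnSn 1) ord_max = 0 :> 'I_2 by apply/val_inj.
by have -> : ord_max = 1 :> 'I_2 by apply/val_inj.
Qed.

Lemma S2_ge0 M : 0 <= S2 M.
Proof. rewrite /S2; have := normr_ge0 (M 0 0); have := normr_ge0 (M 0 1);
  have := normr_ge0 (M 1 0); have := normr_ge0 (M 1 1); lra. Qed.

Lemma S2_mul A B : S2 (A *m B) <= S2 A * S2 B.
Proof.
rewrite /S2 !mul22.
set a00 := A 0 0; set a01 := A 0 1; set a10 := A 1 0; set a11 := A 1 1.
set b00 := B 0 0; set b01 := B 0 1; set b10 := B 1 0; set b11 := B 1 1.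
have T (x y z w : R) : `|x * y + z * w| <= `|x| * `|y| + `|z| * `|w|.
  by rewrite -!normrM ler_normD.
have h1 := T a00 b00 a01 b10; have h2 := T a00 b01 a01 b11.
have h3 := T a10 b00 a11 b10; have h4 := T a10 b01 a11 b11.
have P (x y : R) : 0 <= `|x| * `|y| by rewrite mulr_ge0.
have := P a00 b01; have := P a00 b11; have := P a01 b00; have := P a01 b01;
have := P a10 b01; have := P a10 b11; have := P a11 b00; have := P a11 b01;
have := P a00 b00; have := P a01 b10; have := P a10 b00; have := P a11 b10;
have := P a00 b10; have := P a01 b11; have := P a10 b10; have := P a11 b11.
move=> *; nra.
Qed.

Lemma ord2 (i : 'I_2) : i = 0 \/ i = 1.
Proof. case: i => [[|[|//]]] Hi; [left|right]; exact/val_inj. Qed.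

Lemma det22 M : \det M = M 0 0 * M 1 1 - M 0 1 * M 1 0.
Proof.
rewrite (expand_det_row _ 0) !big_ord_recr big_ord0 /= add0r.
rewrite /cofactor !det_mx11 /= !mxE /=.
have -> : widen_ord (leqnSn 1) ord_max = 0 :> 'I_2 by apply/val_inj.
have -> : ord_max = 1 :> 'I_2 by apply/val_inj.
rewrite !expr0 !expr1.
have -> : lift 0 0 = 1 :> 'I_2 by apply/val_inj.
have -> : lift 1 0 = 0 :> 'I_2 by apply/val_inj.
ring.
Qed.

Lemma S2_det1 M : \det M = 1 -> 1 <= S2 M.
Proof.
rewrite det22 /S2 => hd.
have h : 1 <= `|M 0 0| * `|M 1 1| + `|M 0 1| * `|M 1 0|.
  rewrite -{1}hd; apply: (le_trans (ler_norm _)); rewrite -!normrM; apply: ler_normB.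
have := normr_ge0 (M 0 0); have := normr_ge0 (M 0 1);
have := normr_ge0 (M 1 0); have := normr_ge0 (M 1 1). move=> *. nra.
Qed.

Definition adj2 M : 'M[R]_2 := \matrix_(i, j)
  (if (i == 0) && (j == 0) then M 1 1 else if (i == 0) && (j == 1) then - M 0 1
   else if (i == 1) && (j == 0) then - M 1 0 else M 0 0).

Lemma adj2E M i j : adj2 M i j =
  (if (i == 0) && (j == 0) then M 1 1 else if (i == 0) && (j == 1) then - M 0 1
   else if (i == 1) && (j == 0) then - M 1 0 else M 0 0).
Proof. by rewrite mxE. Qed.

Lemma S2_adj2 M : S2 (adj2 M) = S2 M.
Proof. rewrite /S2 !mxE /= !normrN; lra. Qed.

Lemma adj2_mul A B : adj2 (A *m B) = adj2 B *m adj2 A.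
Proof.
apply/matrixP => i j; rewrite mul22 !adj2E.
by case: (ord2 i) => ->; case: (ord2 j) => -> /=; rewrite !mul22; ring.
Qed.


End P1.

Section P1b.
Variable R : realType.
Implicit Types (M A B : 'M[R]_2).
Lemma vnormE (v : 'cV[R]_2) : vnorm v = Num.sqrt (v 0 0 ^+ 2 + v 1 0 ^+ 2).
Proof.
rewrite /vnorm !big_ord_recr big_ord0 /= add0r.
have -> : widen_ord (leqnSn 1) ord_max = 0 :> 'I_2 by apply/val_inj.
by have -> : ord_max = 1 :> 'I_2 by apply/val_inj.
Qed.

Lemma mulv22 M (v : 'cV[R]_2) i : (M *m v) i 0 = M i 0 * v 0 0 + M i 1 * v 1 0.
Proof.
rewrite mxE !big_ord_recr big_ord0 /= add0r.
have -> : widen_ord (leqnSn 1) ord_max = 0 :> 'I_2 by apply/val_inj.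
by have -> : ord_max = 1 :> 'I_2 by apply/val_inj.
Qed.

Lemma sqrt_le_abs (x y : R) : Num.sqrt (x ^+ 2 + y ^+ 2) <= `|x| + `|y|.
Proof.
rewrite -(ger0_norm (addr_ge0 (normr_ge0 x) (normr_ge0 y))) -sqrtr_sqr.
rewrite ler_sqrt ?sqr_ge0 // sqrrD !real_normK ?num_real //.
have := mulr_ge0 (normr_ge0 x) (normr_ge0 y); lra.
Qed.

Lemma abs_le_sqrt (x y : R) : `|x| <= Num.sqrt (x ^+ 2 + y ^+ 2).
Proof.
rewrite -sqrtr_sqr ler_sqrt; last by rewrite addr_ge0 ?sqr_ge0.
by rewrite lerDl sqr_ge0.
Qed.

Lemma abs_le_sqrt' (x y : R) : `|y| <= Num.sqrt (x ^+ 2 + y ^+ 2).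
Proof. by rewrite addrC abs_le_sqrt. Qed.

Lemma unit_coord (v : 'cV[R]_2) : vnorm v = 1 -> `|v 0 0| <= 1 /\ `|v 1 0| <= 1.
Proof.
rewrite vnormE => h.
by split; rewrite -h ?abs_le_sqrt ?abs_le_sqrt'.
Qed.

Definition onset M := [set vnorm (M *m v) | v in [set v : 'cV[R]_2 | vnorm v = 1]].

Lemma onset_ub M : ubound (onset M) (S2 M).
Proof.
move=> _ [v /= /unit_coord [h0 h1] <-].
rewrite vnormE !mulv22; apply: (le_trans (sqrt_le_abs _ _)).
rewrite /S2.
have T (a b : R) : `|b| <= 1 -> `|a * b| <= `|a| by move=> hb; rewrite normrM ler_piMr.
have := T (M 0 0) _ h0; have := T (M 0 1) _ h1; have := T (M 1 0) _ h0; have := T (M 1 1) _ h1.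
have := ler_normD (M 0 0 * v 0 0) (M 0 1 * v 1 0).
have := ler_normD (M 1 0 * v 0 0) (M 1 1 * v 1 0). lra.
Qed.

Definition e0 : 'cV[R]_2 := \col_i (i == 0)%:R.
Definition e1 : 'cV[R]_2 := \col_i (i == 1)%:R.

Lemma e0_unit : vnorm e0 = 1.
Proof. by rewrite vnormE !mxE /= expr0n /= addr0 expr1n sqrtr1. Qed.
Lemma e1_unit : vnorm e1 = 1.
Proof. by rewrite vnormE !mxE /= expr0n /= add0r expr1n sqrtr1. Qed.

Lemma onset_has_sup M : has_sup (onset M).
Proof.
split; first by exists (vnorm (M *m e0)); exists e0 => //; exact: e0_unit.
by exists (S2 M); apply: onset_ub.
Qed.

Lemma opnorm_le M : opnorm M <= S2 M.
Proof.
apply: ge_sup; last exact: onset_ub.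
by exists (vnorm (M *m e0)); exists e0 => //; exact: e0_unit.
Qed.

Lemma opnorm_ge M : S2 M <= 4 * opnorm M.
Proof.
have h0 : vnorm (M *m e0) <= opnorm M.
  by apply: sup_upper_bound; [apply: onset_has_sup | exists e0 => //; apply: e0_unit].
have h1 : vnorm (M *m e1) <= opnorm M.
  by apply: sup_upper_bound; [apply: onset_has_sup | exists e1 => //; apply: e1_unit].
move: h0 h1; rewrite !vnormE !mulv22 !mxE /= !mulr1 !mulr0 ?addr0 ?add0r.
have := abs_le_sqrt (M 0 0) (M 1 0); have := abs_le_sqrt' (M 0 0) (M 1 0).
have := abs_le_sqrt (M 0 1) (M 1 1); have := abs_le_sqrt' (M 0 1) (M 1 1).
rewrite /S2; lra.
Qed.

End P1b.

Section P1d.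
Variable R : realType.
Variable E : R.
Implicit Types (M A B : 'M[R]_2) (w : seq R) (c : R).

Definition Lm c : 'M[R]_2 := Mat E (fun _ => c).
Definition Nm c : 'M[R]_2 := adj2 (Lm c).

Lemma det_Lm c : \det (Lm c) = 1.
Proof. rewrite det22 !mxE /=. ring. Qed.

Lemma Lm_Nm c : Lm c *m Nm c = 1%:M.
Proof.
apply/matrixP => i j; rewrite mul22 !adj2E !mxE.
by case: (ord2 i) => ->; case: (ord2 j) => -> /=; ring.
Qed.

Lemma invmx_Lm c : invmx (Lm c) = Nm c.
Proof.
have h := Lm_Nm c; have [u _] := mulmx1_unit h.
by rewrite -[invmx _]mulmx1 -h mulmxA mulVmx // mul1mx.
Qed.

Definition Mword w : 'M[R]_2 := foldl (fun M c => Lm c *m M) 1%:M w.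
Definition Nword w : 'M[R]_2 := foldr (fun c M => Nm c *m M) 1%:M w.

Lemma foldl_Mword w M : foldl (fun M c => Lm c *m M) M w = Mword w *m M.
Proof.
elim: w M => [|c w IH] M /=; first by rewrite /Mword /= mul1mx.
by rewrite /Mword /= !IH mulmx1 mulmxA.
Qed.

Lemma Mword_cons c w : Mword (c :: w) = Mword w *m Lm c.
Proof. by rewrite /Mword /= foldl_Mword mulmx1. Qed.

Lemma Mword_cat u v : Mword (u ++ v) = Mword v *m Mword u.
Proof. by rewrite /Mword foldl_cat foldl_Mword. Qed.

Lemma det_Mword w : \det (Mword w) = 1.
Proof.
elim: w => [|c w IH]; first by rewrite /Mword /= det1.
by rewrite Mword_cons det_mulmx IH det_Lm mulr1.
Qed.

Lemma adj2_1 : adj2 1%:M = 1%:M :> 'M[R]_2.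
Proof.
apply/matrixP => i j; rewrite !adj2E !mxE.
by case: (ord2 i) => ->; case: (ord2 j) => -> /=; rewrite ?oppr0.
Qed.

Lemma adj2_Mword w : adj2 (Mword w) = Nword w.
Proof.
elim: w => [|c w IH]; first exact: adj2_1.
by rewrite Mword_cons adj2_mul IH.
Qed.

Lemma window_rcons (a : config R) (s : int) k :
  window a s k.+1 = rcons (window a s k) (a (s + k%:Z)).
Proof. by rewrite /window -addn1 iotaD map_cat cats1. Qed.

Lemma window_cons (a : config R) (s : int) k :
  window a s k.+1 = a s :: window a (s + 1) k.
Proof.
rewrite /window /= addr0; congr (_ :: _).
rewrite -[1%N]addn0 iotaDl -map_comp; apply: eq_map => i /=.
by rewrite -addrA -PoszD.
Qed.

Lemma Mpos_word k (a : config R) : Mpos E k a = Mword (window a 1 k).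
Proof.
elim: k => [|k IH] //=.
by rewrite window_rcons /Mword -cats1 foldl_cat /= -/(Mword _) -IH.
Qed.

Lemma Mneg_word k (a : config R) : Mneg E k a = Nword (window a (1 - k%:Z) k).
Proof.
elim: k => [|k IH]; first by [].
rewrite window_cons [LHS]/= IH.
have -> : invmx (Mat E (shiftn (- (k.+1)%:Z) a)) = Nm (a (1 - k.+1%:Z)).
  rewrite -invmx_Lm /Lm /shiftn; congr (invmx _); apply/matrixP => i j; rewrite !mxE.
rewrite /=; congr (_ *m Nword (window a _ k)).
by rewrite -[in RHS]addn1 PoszD opprD addrA subrK.
Qed.

Lemma S2_Mword_ge1 w : 1 <= S2 (Mword w).
Proof. by apply: S2_det1; rewrite det_Mword. Qed.

Lemma size_window (a : config R) s k : size (window a s k) = k.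
Proof. by rewrite /window size_map size_iota. Qed.

Lemma opnorm_Mcoc (n : int) (a : config R) : exists w,
  size w = `|n|%N /\ (exists s, w = window a s `|n|%N /\
     (0 <= n -> s = 1) /\ (n < 0 -> s = 1 + n)) /\
  S2 (Mword w) <= 4 * opnorm (Mcoc E n a) /\ opnorm (Mcoc E n a) <= S2 (Mword w).
Proof.
case: n => k.
  exists (window a 1 k); rewrite size_window; split => //.
  split; first by exists 1.
  have -> : Mcoc E (Posz k) a = Mpos E k a by [].
  by rewrite Mpos_word; split; [apply: opnorm_ge | apply: opnorm_le].
exists (window a (1 - k.+1%:Z) k.+1); rewrite size_window; split => //.
split; first by exists (1 - k.+1%:Z); split => //; split => // _; rewrite NegzE.
have -> : Mcoc E (Negz k) a = Mneg E k.+1 a by [].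
rewrite Mneg_word -adj2_Mword -(S2_adj2 (Mword _)).
by split; [apply: opnorm_ge | apply: opnorm_le].
Qed.

End P1d.

Section P2.
Variable R : realType.
Implicit Types (a : config R) (w x y z : seq R).

Lemma size_window' a s k : size (window a s k) = k.
Proof. by rewrite /window size_map size_iota. Qed.

Lemma nth_window a t k u : (u < k)%N -> nth 0 (window a t k) u = a (t + u%:Z).
Proof. by move=> hu; rewrite /window (nth_map 0%N) ?size_iota // nth_iota. Qed.

Lemma window_eqP a t k w :
  window a t k = w <-> size w = k /\ forall u, (u < k)%N -> a (t + u%:Z) = nth 0 w u.
Proof.
split.
  move=> <-; rewrite size_window'; split => // u hu; by rewrite nth_window.
move=> [hs h]; apply: (@eq_from_nth _ 0); first by rewrite size_window' hs.
by move=> u; rewrite size_window' => hu; rewrite nth_window // h.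
Qed.

Lemma window_cat a t k1 k2 :
  window a t (k1 + k2) = window a t k1 ++ window a (t + k1%:Z) k2.
Proof.
rewrite /window iotaD map_cat add0n; congr (_ ++ _).
rewrite -[k1 in iota k1]addn0 iotaDl -map_comp; apply: eq_map => i /=.
by rewrite PoszD addrA.
Qed.

Lemma take_drop_window a t k i l : (i + l <= k)%N ->
  take l (drop i (window a t k)) = window a (t + i%:Z) l.
Proof.
move=> h; symmetry; apply/window_eqP; split.
  by rewrite size_take size_drop size_window'; apply/minn_idPl; lia.
move=> u hu; rewrite nth_take // nth_drop nth_window; last by lia.
by rewrite PoszD addrA.
Qed.

Lemma occ_pos_le y v i : (0 < size v)%N -> take (size v) (drop i y) == v -> (i + size v <= size y)%N.
Proof.
move=> hv /eqP h; have := congr1 size h; rewrite size_take size_drop.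
move: hv; set sv := size v; set sy := size y.
case: ifP => hc; clear h; lia.
Qed.

Lemma words_window Om a s k : Om a -> (0 < k)%N -> words Om (window a s k).
Proof. by move=> ha hk; exists a, s, k. Qed.

Fixpoint goodA a s x (lo hi : nat) (ps : seq nat) : Prop :=
  match ps with
  | [::] => (lo <= hi)%N
  | p :: ps' => [/\ (lo <= p)%N, window a (s + p%:Z) (size x) = x & goodA a s x (p + size x) hi ps']
  end.

Lemma goodA_le a s x lo hi ps : goodA a s x lo hi ps -> (lo + size ps * size x <= hi)%N.
Proof.
elim: ps lo => [|p ps IH] lo /=; first by rewrite addn0.
case=> h1 _ /IH h2; lia.
Qed.

Lemma goodA_mono a s x lo lo' hi ps : (lo' <= lo)%N -> goodA a s x lo hi ps -> goodA a s x lo' hi ps.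
Proof.
case: ps => [|p ps] /= h; first exact: leq_trans.
by case=> h1 h2 h3; split => //; apply: leq_trans h1.
Qed.

Lemma goodA_cat a s x lo mid hi g1 g2 : goodA a s x lo mid g1 -> goodA a s x mid hi g2 ->
  goodA a s x lo hi (g1 ++ g2).
Proof.
elim: g1 lo => [|p g IH] lo /=; first by move=> h1 h2; apply: goodA_mono h2.
by case=> h1 h2 h3 h4; split => //; apply: IH.
Qed.

End P2.

Section P3.
Variable R : realType.
Implicit Types (a : config R) (w x y z : seq R).

Definition NoClose a s z := forall p d : nat, (0 < d)%N -> (2 * d <= size z)%N ->
  window a (s + p%:Z) (size z) = z -> window a (s + (p + d)%:Z) (size z) = z -> False.

Lemma sel a s z m (NC : NoClose a s z) :
  forall k L lo, (size L <= k)%N -> sorted ltn L ->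
  (forall p, p \in L -> [/\ (lo <= p)%N, (p + size z <= m)%N & window a (s + p%:Z) (size z) = z]) ->
  (lo <= m)%N -> exists ps, goodA a s z lo m ps /\ (size L <= 2 * size ps)%N.
Proof.
elim=> [|k IH] [|p [|p1 rest]] lo //= hk hsort hL hlo; try by exists [::].
- have [h1 h2 h3] := hL p (mem_head _ _).
  by exists [:: p]; split => //=.
- have [h1 h2 h3] := hL p (mem_head _ _).
  have /hL [h1' h2' h3'] : p1 \in p :: p1 :: rest by rewrite !inE eqxx orbT.
  move: hsort => /= /andP [hpp1 hpath].
  have hall := order_path_min ltn_trans hpath.
  have hd (p0 p2 : nat) : (p0 < p2)%N -> window a (s + p0%:Z) (size z) = z ->
      window a (s + p2%:Z) (size z) = z -> (size z < 2 * (p2 - p0))%N.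
    move=> hlt w0 w2; rewrite ltnNge; apply/negP => hle.
    have e : (p0 + (p2 - p0) = p2)%N by lia.
    apply: (NC p0 (p2 - p0)%N _ hle w0); [lia | by rewrite e].
  have hd1 := hd _ _ hpp1 h3 h3'.
  have hrest : forall q, q \in rest ->
      [/\ (p + size z <= q)%N, (q + size z <= m)%N & window a (s + q%:Z) (size z) = z].
    move=> q hq.
    have /hL [g1 g2 g3] : q \in p :: p1 :: rest by rewrite !inE hq !orbT.
    have hq1 : (p1 < q)%N by move/allP: hall => /(_ q hq).
    have hd2 := hd _ _ hq1 h3' g3.
    split => //; lia.
  have hsz : (size rest <= k)%N by lia.
  have [ps' [hg hs]] := IH rest (p + size z)%N hsz (path_sorted hpath) hrest h2.
  exists (p :: ps'); split => //=; lia.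
Qed.

Lemma run a s x q L p : (0 < q)%N -> (2 * q <= size x)%N -> (size x <= L)%N ->
  (forall u, (u < size x)%N -> nth 0 x u = nth 0 x (u %% q)) ->
  (forall u, (u < L)%N -> a (s + (p + u)%:Z) = nth 0 x (u %% q)) ->
  exists gs, goodA a s x p (p + L) gs /\ (2 * L <= 5 * (size gs * size x))%N.
Proof.
move=> hq hqn hnL xper hrun.
set n := size x in hqn hnL xper *.
set t := ((n %/ q).+1 * q)%N.
set J := ((L - n) %/ t).+1.
have ht1 : (n < t)%N by apply: ltn_ceil.
have ht2 : (t <= n + q)%N by rewrite /t mulSn addnC leq_add2r leq_divM.
have ht0 : (0 < t)%N by lia.
have hJ1 : ((J - 1) * t <= L - n)%N by rewrite /J subn1 /= leq_divM.
have hJ2 : (L - n < J * t)%N by apply: ltn_ceil.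
have key : forall J' j0 lo, (j0 + J' = J)%N -> (lo <= p + j0 * t)%N -> (lo <= p + L)%N ->
    goodA a s x lo (p + L) [seq (p + j * t)%N | j <- iota j0 J'].
  elim=> [|J' IHJ] j0 lo hj hlo1 hlo2 //=.
  have hj0 : (j0 * t + n <= L)%N.
    have hjJ : (j0 <= J - 1)%N by lia.
    have := leq_mul hjJ (leqnn t); lia.
  split => //.
    apply/window_eqP; split => // u hu.
    rewrite -addrA -PoszD -addnA hrun; last by lia.
    by rewrite [RHS]xper // /t mulnA modnMDl.
  apply: IHJ; [lia| |lia].
  by rewrite mulSn; lia.
exists [seq (p + j * t)%N | j <- iota 0 J]; split.
  by apply: key => //; lia.
rewrite size_map size_iota.
have hJ0 : (1 <= J)%N by [].
nia.
Qed.

Lemma subst a s z x hi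
  (hz : forall p, window a (s + p%:Z) (size z) = z ->
     exists gs, goodA a s x p (p + size z) gs /\ (2 * size z <= 5 * (size gs * size x))%N) :
  forall ps lo, goodA a s z lo hi ps ->
  exists gs, goodA a s x lo hi gs /\ (2 * size z * size ps <= 5 * (size gs * size x))%N.
Proof.
elim=> [|p ps IH] lo /=.
  by move=> h; exists [::]; split => //; rewrite muln0.
case=> h1 h2 h3.
have [gp [hgp hcp]] := hz p h2.
have [gs [hgs hcs]] := IH _ h3.
exists (gp ++ gs); split.
  by apply: (goodA_mono h1); apply: goodA_cat hgp hgs.
rewrite size_cat; nia.
Qed.

Definition hasper x q := forall u, (u < size x)%N -> nth 0 x u = nth 0 x (u %% q).

Lemma NC_A a s x : (forall q, (0 < q)%N -> (2 * q <= size x)%N -> ~ hasper x q) ->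
  NoClose a s x.
Proof.
move=> hnp p d hd hdn w1 w2; apply: (hnp d hd hdn).
move/window_eqP: w1 => [_ w1]; move/window_eqP: w2 => [_ w2].
elim/ltn_ind => u IH hu.
case: (ltnP u d) => hud; first by rewrite modn_small.
have -> : u = ((u - d) + d)%N by lia.
rewrite modnDr -IH; [|lia|lia].
have hu1 : ((u - d) + d < size x)%N by lia.
have hu2 : (u - d < size x)%N by lia.
rewrite -(w1 _ hu1) -(w2 _ hu2).
by congr a; rewrite !PoszD !addrA; ring.
Qed.

Definition ext x q L := mkseq (fun u => nth 0 x (u %% q)) L.

Lemma size_ext x q L : size (ext x q L) = L.
Proof. by rewrite size_mkseq. Qed.

Lemma window_ext a t x q L :
  window a t L = ext x q L <-> forall u, (u < L)%N -> a (t + u%:Z) = nth 0 x (u %% q).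
Proof.
split.
  by move/window_eqP => [_ h] u hu; rewrite h // nth_mkseq.
move=> h; apply/window_eqP; rewrite size_ext; split => // u hu.
by rewrite nth_mkseq // h.
Qed.

Lemma NC_B_union a t x q l d : (0 < q)%N -> (2 * q <= size x)%N -> (size x <= l)%N ->
  (0 < d)%N -> (2 * d <= l)%N ->
  window a t l = ext x q l -> window a (t + d%:Z) l = ext x q l ->
  window a t (l + d) = ext x q (l + d).
Proof.
move=> hq hqn hnl hd hdl /window_ext w1 /window_ext w2; apply/window_ext.
elim/ltn_ind => u IH hu.
case: (ltnP u l) => hul; first exact: w1.
have e1 : a (t + u%:Z) = nth 0 x ((u - d) %% q).
  rewrite -w2; last by lia.
  by congr a; rewrite -addrA -PoszD; congr (_ + Posz _); lia.
have e2 : a (t + (u - q)%:Z) = nth 0 x ((u - d) %% q).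
  have -> : (u - d = (u - q - d) + q)%N by lia.
  rewrite modnDr -w2; last by lia.
  by congr a; rewrite -addrA -PoszD; congr (_ + Posz _); lia.
rewrite e1 -e2 IH; [|lia|lia].
have hqu : (q <= u)%N by lia.
by rewrite -[in RHS](subnK hqu) modnDr.
Qed.

End P3.

Section P4a.
Variable R : realType.
Variable E : R.
Implicit Types (a : config R) (w x y z : seq R).

Definition F w : R := ln (S2 (Mword E w)).

Lemma F_ge0 w : 0 <= F w.
Proof. by apply: ln_ge0; apply: S2_Mword_ge1. Qed.

Lemma S2_pos (M : 'M[R]_2) : 1 <= S2 M -> S2 M \is Num.pos.
Proof. by move=> h; rewrite posrE; apply: lt_le_trans h. Qed.

Lemma F_cat u v : F (u ++ v) <= F u + F v.
Proof.
have h1 := S2_Mword_ge1 E u; have h2 := S2_Mword_ge1 E v.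
have h3 : 1 <= S2 (Mword E v *m Mword E u).
  by apply: S2_det1; rewrite det_mulmx !det_Mword mulr1.
rewrite /F Mword_cat addrC -lnM ?S2_pos // ler_ln ?S2_pos //; first exact: S2_mul.
rewrite posrE; apply: mulr_gt0; lra.
Qed.

Lemma ln_le_sub1 (y : R) : 0 < y -> ln y <= y - 1.
Proof. by move=> hy; have := @le_ln1Dx R (y - 1); rewrite addrCA subrr addr0; apply; lra. Qed.

Lemma F_le_S2 w : F w <= S2 (Mword E w).
Proof.
apply: le_trans (ln_le_sub1 _) _; last lra.
by apply: lt_le_trans ltr01 (S2_Mword_ge1 _ _).
Qed.

Lemma S2_Lm c : S2 (Lm E c) = `|E - c| + 2.
Proof. rewrite /S2 !mxE /= normrN normr1 normr0; lra. Qed.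

Lemma F_single c : F [:: c] <= `|E - c| + 2.
Proof.
apply: le_trans (F_le_S2 _) _.
by rewrite /Mword /= mulmx1 S2_Lm.
Qed.

Lemma F_nil : F [::] <= 2.
Proof.
apply: le_trans (F_le_S2 _) _.
rewrite /Mword /= /S2 !mxE /= normr1 normr0; lra.
Qed.

Lemma F_window_bound (K : R) a : 2 <= K -> (forall n, `|E - a n| + 2 <= K) ->
  forall s k, F (window a s k) <= K * k%:R + K.
Proof.
move=> hK ha s k; elim: k s => [|k IH] s.
  by rewrite mulr0 add0r; apply: le_trans F_nil _.
rewrite window_cons -cat1s; apply: le_trans (F_cat _ _) _.
have := F_single (a s); have := ha s; have := IH (s + 1).
rewrite -natr1; nra.
Qed.

End P4a.

Section P4b.
Variable R : realType.
Variable E : R.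
Variable Om : set (config R).
Variable K : R.
Hypothesis hK : 2 <= K.
Hypothesis hKa : forall a, Om a -> forall n, `|E - a n| + 2 <= K.
Hypothesis hne : exists a, Om a.
Implicit Types (a : config R) (w x y z : seq R).

Local Notation F := (F E).

Lemma word_bound w : words Om w -> F w <= K * (size w)%:R + K.
Proof.
move=> [a [s [k [ha [hk ->]]]]]; rewrite size_window'.
exact: (F_window_bound hK (hKa ha)).
Qed.

Definition Wm (m : nat) := [set F w | w in [set w | words Om w /\ size w = m]].
Definition Mx (m : nat) := sup (Wm m).

Lemma Wm_ne m : (0 < m)%N -> Wm m !=set0.
Proof.
case: hne => a ha hm; exists (F (window a 0 m)); exists (window a 0 m) => //.
by split; [apply: words_window | rewrite size_window'].
Qed.

Lemma Wm_ub m : ubound (Wm m) (K * m%:R + K).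
Proof. by move=> _ [w [hw <-] <-]; apply: word_bound. Qed.

Lemma Mx_ub w : words Om w -> F w <= Mx (size w).
Proof.
move=> hw; apply: sup_upper_bound.
  split; last by exists (K * (size w)%:R + K); apply: Wm_ub.
  by exists (F w); exists w.
by exists w.
Qed.

Lemma Mx_le m b : (0 < m)%N -> (forall w, words Om w -> size w = m -> F w <= b) -> Mx m <= b.
Proof.
move=> hm h; apply: ge_sup; first exact: Wm_ne.
by move=> _ [w [hw hs] <-]; apply: h.
Qed.

Lemma Mx_ge0 m : (0 < m)%N -> 0 <= Mx m.
Proof.
move=> hm; case: (Wm_ne hm) => x [w [hw hs] hx].
by apply: le_trans (F_ge0 _ _) _; rewrite -hs; apply: Mx_ub.
Qed.

Definition LamS := [set Mx m / m%:R | m in [set m : nat | (0 < m)%N]].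
Definition Lam := inf LamS.

Lemma LamS_ne : LamS !=set0.
Proof. by exists (Mx 1 / 1%:R); exists 1%N. Qed.

Lemma LamS_lb : lbound LamS 0.
Proof.
move=> _ [m hm <-]; apply: divr_ge0; first exact: Mx_ge0.
by rewrite ler0n.
Qed.

Lemma Lam_le m : (0 < m)%N -> Lam <= Mx m / m%:R.
Proof.
move=> hm; apply: ge_inf; first by exists 0; apply: LamS_lb.
by exists m.
Qed.

Lemma Lam_ge0 : 0 <= Lam.
Proof. by apply: lb_le_inf; [apply: LamS_ne | apply: LamS_lb]. Qed.

Lemma Lam_adh (eps : R) : 0 < eps -> exists m, (0 < m)%N /\ Mx m < (Lam + eps) * m%:R.
Proof.
move=> he.
have hinf : has_inf LamS by split; [apply: LamS_ne | exists 0; apply: LamS_lb].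
have [_ [m hm <-] h] := inf_adherent he hinf.
exists m; split => //; rewrite -ltr_pdivrMr // ltr0n //.
Qed.


Lemma UB (eps : R) : 0 < eps -> exists B : R, 0 <= B /\
  forall a, Om a -> forall s k, F (window a s k) <= (Lam + eps) * k%:R + B.
Proof.
move=> he; have [m [hm hmx]] := Lam_adh he.
have hK' := hK.
have hL := Lam_ge0.
have hm0 : (0 : R) <= m%:R by rewrite ler0n.
have hK0 : 0 <= K by move: hK; lra.
have hKm := mulr_ge0 hK0 hm0.
exists (K * m%:R + K); split; first lra.
move=> a ha s k; elim/ltn_ind: k s => k IH s.
case: (ltnP k m) => hkm.
  apply: le_trans (F_window_bound hK (hKa ha) s k) _.
  have hkm' : k%:R <= m%:R :> R by rewrite ler_nat ltnW.
  have h1 : K * k%:R <= K * m%:R by nra.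
  have h2 : 0 <= (Lam + eps) * k%:R by apply: mulr_ge0; [lra | rewrite ler0n].
  lra.
have e : k = (m + (k - m))%N by lia.
rewrite e window_cat; apply: le_trans (F_cat _ _ _) _.
have h1 : F (window a s m) <= Mx m.
  by rewrite -{2}(size_window' a s m); apply: Mx_ub; apply: words_window.
have h2 := IH (k - m)%N (ltac:(lia)) (s + m%:Z).
rewrite natrD; lra.
Qed.

Lemma DEC a s x G B :
  (forall t k, F (window a t k) <= G * k%:R + B) ->
  forall ps lo hi, goodA a s x lo hi ps ->
  F (window a (s + lo%:Z) (hi - lo)) <=
    (size ps)%:R * F x + G * ((hi - lo)%:R - (size ps)%:R * (size x)%:R) + ((size ps)%:R + 1) * B.
Proof.
move=> hb; elim=> [|p ps IH] lo hi /=.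
  by move=> hlo; have := hb (s + lo%:Z) (hi - lo)%N; lra.
case=> h1 h2 h3; have hle := goodA_le h3.
have e : (hi - lo = (p - lo) + (size x + (hi - (p + size x))))%N by lia.
rewrite e window_cat window_cat.
have -> : s + lo%:Z + (p - lo)%N%:Z = s + p%:Z by rewrite -addrA -PoszD subnKC.
rewrite h2.
have -> : s + p%:Z + (size x)%:Z = s + (p + size x)%N%:Z by rewrite PoszD addrA.
apply: le_trans (F_cat _ _ _) _.
have := F_cat E x (window a (s + (p + size x)%N%:Z) (hi - (p + size x))).
have := hb (s + lo%:Z) (p - lo)%N.
have := IH _ _ h3.
move=> h4 h5 h6; rewrite !natrD -!natr1; lra.
Qed.

End P4b.

Section P4c.
Variable R : realType.
Variable Om : set (config R).
Variable C : R.
Hypothesis hC : 0 < C.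
Hypothesis hPW : forall v, words Om v -> forall eps : R, 0 < eps -> exists N : nat,
  forall x, words Om x -> (N <= size x)%N ->
  C - eps <= (occ v x)%:R / (size x)%:R * (size v)%:R.
Implicit Types (a : config R) (w x y z : seq R).

Lemma PWhalf v : words Om v -> exists N : nat, forall a s m, Om a -> (N <= m)%N ->
  C / 2 * m%:R <= (occ v (window a s m))%:R * (size v)%:R.
Proof.
move=> hv; have hC2 : 0 < C / 2 by move: hC; lra.
have [N hN] := hPW hv hC2.
exists (maxn N 1) => a s m ha hm.
have hm1 : (0 < m)%N by move: hm; rewrite geq_max => /andP [_ ->].
have hNm : (N <= m)%N by move: hm; rewrite geq_max => /andP [-> _].
have := hN (window a s m) (words_window s ha hm1); rewrite size_window' => /(_ hNm).
have hmr : (0 : R) < m%:R by rewrite ltr0n.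
rewrite mulrAC ler_pdivlMr // => h.
by move: h hC; lra.
Qed.

Lemma occ_sel a s z m : NoClose a s z -> (0 < size z)%N ->
  exists ps, goodA a s z 0 m ps /\ (occ z (window a s m) <= 2 * size ps)%N.
Proof.
move=> NC hz.
set y := window a s m.
set P := fun i => take (size z) (drop i y) == z.
set L := seq.filter P (iota 0 (size y - size z).+1).
have hocc : occ z y = size L by rewrite /occ size_filter.
have hL : forall p, p \in L ->
    [/\ (0 <= p)%N, (p + size z <= m)%N & window a (s + p%:Z) (size z) = z].
  move=> p; rewrite mem_filter => /andP [hp _].
  have hle := occ_pos_le hz hp.
  move: hle; rewrite /y size_window' => hle.
  split => //; move/eqP: hp; rewrite /y take_drop_window //.
have hsort : sorted ltn L by apply: sorted_filter; [exact: ltn_trans | exact: iota_ltn_sorted].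
have [ps [hg hs]] := @sel R a s z m NC (size L) L 0 (leqnn _) hsort hL (leq0n _).
by exists ps; split => //; rewrite hocc.
Qed.

Lemma mod_fix (i q : nat) : (0 < q)%N -> ((i + (q - i %% q) %% q) %% q = 0)%N.
Proof.
move=> hq; rewrite modnDmr.
rewrite -modnDml subnKC ?modnn //.
by apply: ltnW; apply: ltn_pmod.
Qed.


Definition cc : R := Num.min C 1 / 10.

Lemma cc_pos : 0 < cc.
Proof. rewrite /cc; apply: divr_gt0 => //; rewrite lt_min hC ltr01 //. Qed.

Lemma cc_leC : cc <= C / 10.
Proof. rewrite /cc ler_pM2r ?invr_gt0 ?ltr0n // ge_min lexx //. Qed.

Lemma cc_le1 : cc <= 1 / 10.
Proof. rewrite /cc ler_pM2r ?invr_gt0 ?ltr0n // ge_min lexx orbT //. Qed.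

Lemma words_size_pos w : words Om w -> (0 < size w)%N.
Proof. by move=> [a [s [k [_ [hk ->]]]]]; rewrite size_window'. Qed.

Lemma COV_A x : words Om x ->
  (forall q, (0 < q)%N -> (2 * q <= size x)%N -> ~ hasper x q) ->
  exists N1 : nat, forall a s m, Om a -> (N1 <= m)%N ->
  exists ps, goodA a s x 0 m ps /\ cc * m%:R <= (size ps * size x)%N%:R.
Proof.
move=> hx hnp; have hn := words_size_pos hx.
have [N hN] := PWhalf hx; exists N => a s m ha hm.
have [ps [hg hs]] := @occ_sel a s x m (@NC_A R a s x hnp) hn.
exists ps; split => //.
have h1 := hN a s m ha hm.
have h2 : ((occ x (window a s m)) * size x)%N%:R <= (2 * size ps * size x)%N%:R :> R.
  by rewrite ler_nat leq_mul.
move: h2; rewrite !natrM => h2.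
have hm0 : (0 : R) <= m%:R by rewrite ler0n.
have h3 : cc * m%:R <= C / 10 * m%:R by apply: ler_wpM2r => //; apply: cc_leC.
move: hC; nra.
Qed.

Lemma COV_B1 x q : words Om x -> (0 < q)%N -> (2 * q <= size x)%N -> hasper x q ->
  (forall L, exists l, (L <= l)%N /\ (size x <= l)%N /\ words Om (ext x q l)) ->
  exists N1 : nat, forall a s m, Om a -> (N1 <= m)%N ->
  exists ps, goodA a s x 0 m ps /\ cc * m%:R <= (size ps * size x)%N%:R.
Proof.
move=> hx hq hqn xper hunb; have hn := words_size_pos hx.
exists (size x + q + 1)%N => a s m ha hm.
have hm0 : (0 < m)%N by lia.
have hy := words_window s ha hm0.
have [Ny hNy] := PWhalf hy.
have [l [hl [hnl [a' [s' [k' [ha' [hk' he]]]]]]]] := hunb (Ny + m)%N.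
have hkl : k' = l by move: (congr1 size he); rewrite size_ext size_window'.
move: he; rewrite hkl => he.
have := hNy a' s' l ha' (ltac:(lia)); rewrite -he size_window' => hocc.
have hoccpos : (0 < occ (window a s m) (ext x q l))%N.
  rewrite lt0n; apply/negP => /eqP h0; move: hocc; rewrite h0 mul0r.
  have : (0 : R) < l%:R by rewrite ltr0n; lia.
  move: hC; nra.
move: hoccpos; rewrite /occ -has_count => /hasP [i _ hi].
have hym : (0 < size (window a s m))%N by rewrite size_window'.
have hil := occ_pos_le hym hi.
rewrite size_window' size_ext in hil.
have hyx : forall u, (u < m)%N -> a (s + u%:Z) = nth 0 x ((i + u) %% q).
  move=> u hu; move/eqP: hi => hi.
  have := congr1 (fun w => nth 0 w u) hi; rewrite /= size_window'.
  rewrite nth_take // nth_drop nth_window // /ext nth_mkseq; [by move=> <- | lia].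
set j0 := ((q - i %% q) %% q)%N.
have hj0 : (j0 < q)%N by apply: ltn_pmod.
have hrun : forall u, (u < m - j0)%N -> a (s + (j0 + u)%N%:Z) = nth 0 x (u %% q).
  move=> u hu; rewrite hyx; last by lia.
  by rewrite addnA -modnDml mod_fix.
have [gs [hg hc]] := run hq hqn (ltac:(lia) : (size x <= m - j0)%N) xper hrun.
exists gs; split.
  by apply: (goodA_mono (leq0n j0)); rewrite subnKC // in hg; lia.
have hmn : (m <= 10 * (size gs * size x))%N by lia.
have : m%:R <= 10 * (size gs * size x)%N%:R :> R by rewrite -natrM ler_nat.
have hm0' : (0 : R) <= m%:R by rewrite ler0n.
have h3 : cc * m%:R <= 1 / 10 * m%:R by apply: ler_wpM2r => //; apply: cc_le1.
lra.
Qed.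


Lemma COV_B2 x q l : words Om x -> (0 < q)%N -> (2 * q <= size x)%N -> hasper x q ->
  (size x <= l)%N -> words Om (ext x q l) ->
  (forall l', (size x <= l')%N -> words Om (ext x q l') -> (l' <= l)%N) ->
  exists N1 : nat, forall a s m, Om a -> (N1 <= m)%N ->
  exists ps, goodA a s x 0 m ps /\ cc * m%:R <= (size ps * size x)%N%:R.
Proof.
move=> hx hq hqn xper hnl hz hmax; have hn := words_size_pos hx.
set z := ext x q l.
have hsz : size z = l by rewrite size_ext.
have hl0 : (0 < l)%N by lia.
have NCz : forall a s, Om a -> NoClose a s z.
  move=> a s ha p d hd hdl w1 w2; rewrite hsz in hdl w1 w2.
  have w2' : window a (s + p%:Z + d%:Z) l = ext x q l by rewrite -addrA -PoszD.
  have hu := NC_B_union hq hqn hnl hd hdl w1 w2'.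
  have hw : words Om (ext x q (l + d)) by rewrite -hu; apply: words_window => //; lia.
  have hle : (size x <= l + d)%N by lia.
  have := hmax _ hle hw; lia.
have hcov : forall a s p, window a (s + p%:Z) (size z) = z ->
    exists gs, goodA a s x p (p + size z) gs /\ (2 * size z <= 5 * (size gs * size x))%N.
  move=> a s p; rewrite hsz => /window_ext hw.
  apply: (@run R a s x q l p hq hqn hnl xper).
  by move=> u hu; rewrite PoszD addrA hw.
have [N hN] := PWhalf hz; exists N => a s m ha hm.
have hz0 : (0 < size z)%N by rewrite hsz.
have [ps [hg hs]] := @occ_sel a s z m (NCz a s ha) hz0.
have [gs [hgs hcs]] := @subst R a s z x m (hcov a s) ps 0 hg.
exists gs; split => //.
have h1 := hN a s m ha hm.
rewrite hsz in h1 hcs.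
have h2 : (occ z (window a s m) * l <= 5 * (size gs * size x))%N.
  by apply: leq_trans hcs; rewrite mulnAC; apply: leq_mul.
have : ((occ z (window a s m)) * l)%N%:R <= (5 * (size gs * size x))%N%:R :> R by rewrite ler_nat.
rewrite natrM [in X in _ <= X -> _]natrM => h3.
have hm0 : (0 : R) <= m%:R by rewrite ler0n.
have h4 : cc * m%:R <= C / 10 * m%:R by apply: ler_wpM2r => //; apply: cc_leC.
move: hC; lra.
Qed.

Lemma COV x : words Om x ->
  exists N1 : nat, forall a s m, Om a -> (N1 <= m)%N ->
  exists ps, goodA a s x 0 m ps /\ cc * m%:R <= (size ps * size x)%N%:R.
Proof.
move=> hx.
case: (pselect (exists q, [/\ (0 < q)%N, (2 * q <= size x)%N & hasper x q])); last first.
  move=> hno; apply: COV_A => // q hq hqn hp; apply: hno; by exists q; split.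
case=> q [hq hqn xper].
pose S l := (size x <= l)%N /\ words Om (ext x q l).
case: (pselect (forall L, exists l, (L <= l)%N /\ S l)) => hunb.
  by apply: (COV_B1 hx hq hqn xper) => L; have [l [h1 [h2 h3]]] := hunb L; exists l.
have [L0 hL0] : exists L0, forall l, S l -> (l < L0)%N.
  apply: contra_notP hunb => hne L.
  apply: contra_notP hne => hno; exists L => l hl; rewrite ltnNge; apply/negP => hLl.
  by apply: hno; exists l.
have hSn : S (size x).
  split => //; congr (words Om _): hx; apply: (@eq_from_nth _ 0); rewrite ?size_ext //.
  by move=> u hu; rewrite /ext nth_mkseq // xper.
have exP : exists l, `[< S l >] by exists (size x); apply/asboolP.
have ubP : forall l, `[< S l >] -> (l <= L0)%N by move=> l /asboolP /hL0 /ltnW.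
case: (ex_maxnP exP ubP) => l /asboolP [hnl hSl] hmax.
apply: (COV_B2 hx hq hqn xper hnl hSl) => l' h1 h2.
by apply: hmax; apply/asboolP.
Qed.

End P4c.

Lemma exists_nat_gt (R : realType) (x : R) : exists n : nat, x < n%:R.
Proof.
case: (lerP 0 x) => hx; first by exists (Num.Def.archi_bound x); apply: archi_boundP.
by exists 0%N; rewrite mulr0n.
Qed.

Section P4d.
Variable R : realType.
Variable E : R.
Variable Om : set (config R).
Variable K : R.
Hypothesis hK : 2 <= K.
Hypothesis hKa : forall a, Om a -> forall n, `|E - a n| + 2 <= K.
Hypothesis hne : exists a, Om a.
Variable C : R.
Hypothesis hC : 0 < C.
Hypothesis hPW : forall v, words Om v -> forall eps : R, 0 < eps -> exists N : nat,
  forall x, words Om x -> (N <= size x)%N ->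
  C - eps <= (occ v x)%:R / (size x)%:R * (size v)%:R.
Implicit Types (a : config R) (w x y z : seq R).

Local Notation F := (F E).
Local Notation Lam := (Lam E Om).

Lemma LB (d : R) : 0 < d -> exists N0 : nat, forall x, words Om x -> (N0 <= size x)%N ->
  (Lam - d) * (size x)%:R <= F x.
Proof.
move=> hd.
set c := cc C.
have hc : 0 < c := cc_pos hC.
have hcd : 0 < c * d by apply: mulr_gt0.
have he' : 0 < c * d / 4 by apply: divr_gt0.
have [B [hB hUB]] := UB hK hKa hne he'.
have [N0 hN0] := exists_nat_gt (4 * B / (c * d)).
exists N0 => x hx hxN.
case: (lerP ((Lam - d) * (size x)%:R) (F x)) => // hlt; exfalso.
have [N1 hN1] := COV hC hPW hx.
have [M2 hM2] := exists_nat_gt (2 * B / (c * d)).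
set m := maxn N1 (maxn M2 1).
have hm1 : (N1 <= m)%N by rewrite leq_maxl.
have hmM : (M2 <= m)%N by rewrite /m (leq_trans (leq_maxl M2 1)) // leq_maxr.
have hm0 : (0 < m)%N by rewrite /m (leq_trans (leq_maxr M2 1)) // leq_maxr.
set n := size x.
have hnr : (N0%:R : R) <= n%:R by rewrite ler_nat.
have hBn : 4 * B < c * d * n%:R.
  move: hN0; rewrite ltr_pdivrMr // => h.
  have : N0%:R * (c * d) <= n%:R * (c * d) by rewrite ler_pM2r.
  lra.
have hmr : (M2%:R : R) <= m%:R by rewrite ler_nat.
have hBm : 2 * B < c * d * m%:R.
  move: hM2; rewrite ltr_pdivrMr // => h.
  have : M2%:R * (c * d) <= m%:R * (c * d) by rewrite ler_pM2r.
  lra.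
have hMx : Mx E Om m <= (Lam - c * d / 2) * m%:R + B.
  apply: (Mx_le hne hm0) => w [a [s [k [ha [hk ->]]]]]; rewrite size_window' => hkm.
  rewrite hkm.
  have [ps [hg hcov]] := hN1 a s m ha hm1.
  have hdec := DEC hK (hUB a ha) hg.
  rewrite addr0 subn0 in hdec.
  have hle := goodA_le hg; rewrite add0n in hle.
  apply: le_trans hdec _.
  set sp := (size ps)%:R : R.
  have hX : ((size ps * n)%N%:R : R) = sp * n%:R by rewrite natrM.
  have hXm : sp * n%:R <= m%:R by rewrite -hX ler_nat.
  rewrite hX in hcov.
  have hsp : 0 <= sp by rewrite ler0n.
  have hn0 : (0 : R) <= n%:R by rewrite ler0n.
  have p1 : sp * F x <= sp * ((Lam - d) * n%:R) by apply: ler_wpM2l => //; apply: ltW.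
  have p2 : sp * (4 * B) <= sp * (c * d * n%:R) by apply: ler_wpM2l => //; apply: ltW.
  have p3 : d * (c * m%:R) <= d * (sp * n%:R) by apply: ler_wpM2l => //; apply: ltW.
  have p5 : c * d * (sp * n%:R) <= c * d * m%:R by apply: ler_wpM2l => //; apply: ltW.
  have p4 : 0 <= c * d * (sp * n%:R) by apply: mulr_ge0; [apply: ltW | apply: mulr_ge0].
  lra.
have hL := Lam_le hK hKa hne hm0.
have hmpos : (0 : R) < m%:R by rewrite ltr0n.
move: hL; rewrite ler_pdivlMr // => hL.
lra.
Qed.

End P4d.

Section P5.
Variable R : realType.
Variable E : R.
Variable Om : set (config R).
Variable K : R.
Hypothesis hK : 2 <= K.
Hypothesis hKa : forall a, Om a -> forall n, `|E - a n| + 2 <= K.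
Hypothesis hne : exists a, Om a.
Variable C : R.
Hypothesis hC : 0 < C.
Hypothesis hPW : forall v, words Om v -> forall eps : R, 0 < eps -> exists N : nat,
  forall x, words Om x -> (N <= size x)%N ->
  C - eps <= (occ v x)%:R / (size x)%:R * (size v)%:R.

Lemma main_unif : uniform_cocycle E Om.
Proof.
exists (fun _ => Lam E Om) => eps he.
have he2 : 0 < eps / 2 by apply: divr_gt0.
have [N0 hN0] := LB hK hKa hne hC hPW he2.
have [B [hB hUB]] := UB hK hKa hne he2.
have [M hM] := exists_nat_gt (2 * (B + 3) / eps).
exists (maxn (maxn N0 1) M) => a ha n hn.
set k := `|n|%N in hn *.
have hk0 : (0 < k)%N by move: hn; rewrite !geq_max => /andP [/andP [_ ->] _].
have hkN0 : (N0 <= k)%N by move: hn; rewrite !geq_max => /andP [/andP [-> _] _].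
have hkM : (M <= k)%N by move: hn; rewrite !geq_max => /andP [_ ->].
have [w [hw1 [[s [hws _]] [hlo hup]]]] := opnorm_Mcoc E n a.
rewrite -/k in hw1 hws.
have hw : words Om w by rewrite hws; apply: words_window.
have hl := hN0 w hw; rewrite hw1 in hl; have := hl hkN0 => {}hl.
have hu := hUB a ha s k; rewrite -hws in hu.
set op := opnorm (Mcoc E n a) in hlo hup *.
have hS1 := S2_Mword_ge1 E w.
have hop : 0 < op by move: hlo hS1; lra.
have h1 : ln op <= F E w.
  by rewrite /F ler_ln ?posrE //; lra.
have h2 : F E w <= ln 4 + ln op.
  rewrite /F -lnM ?posrE //.
  have hpos1 : 0 < S2 (Mword E w) by lra.
  have hpos2 : 0 < 4 * op by lra.
  by rewrite ler_ln ?posrE.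
have h4 : ln (4 : R) <= 3 by apply: le_trans (ln_le_sub1 _) _; lra.
have hkr : (0 : R) < k%:R by rewrite ltr0n.
have hMk : (M%:R : R) <= k%:R by rewrite ler_nat.
have hBk : 2 * (B + 3) < eps * k%:R.
  move: hM; rewrite ltr_pdivrMr // => h.
  have : M%:R * eps <= k%:R * eps by rewrite ler_pM2r.
  lra.
rewrite ltr_norml; apply/andP; split.
  by rewrite ltrBrDr ltr_pdivlMr //; lra.
by rewrite ltrBlDr ltr_pdivrMr //; lra.
Qed.

End P5.

Lemma finite_bound (R : realType) (A : set R) : finite_set A ->
  exists b : R, 0 <= b /\ forall c, A c -> `|c| <= b.
Proof.
move/finite_seqP => [sA ->].
exists (\sum_(c <- sA) `|c|); split; first by apply: sumr_ge0.
move=> c /= hc; elim: sA hc => [//|h t IH]; rewrite inE big_cons => /orP [/eqP ->|ht].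
  by rewrite lerDl sumr_ge0.
by apply: le_trans (IH ht) _; rewrite lerDr.
Qed.

Theorem theorem2p5 (R : realType) (A : set R) (Om : set (config R)) :
  finite_set A -> subshift A Om -> PW Om ->
  forall E : R, uniform_cocycle E Om.
Proof.
move=> hA [hOm _] [C [hC hPW]] E.
case: (pselect (exists a, Om a)) => hne; last first.
  exists (fun _ => 0) => eps he; exists 0%N => a ha; exfalso; apply: hne; by exists a.
have [b [hb hbA]] := finite_bound hA.
apply: (@main_unif R E Om (`|E| + b + 2) _ _ hne C hC hPW).
  by have := normr_ge0 E; lra.
move=> a ha n; have := hbA _ (hOm a ha n); have := ler_normB E (a n); lra.
Qed.
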